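(* Let $p:X_2\to X_1$, $q:Y_2\to Y_1$, $s:W_2\to W_1$, $f:X_1\to Y_1$, $g:Y_1\to W_1$, $h:X_2\to Y_2$, $k:Y_2\to W_2$ be equivariant maps with $f\circ p=q\circ h$ and $g\circ q=s\circ k$, such that both squares (square (1): $p,f,h,q$; square (2): $q,g,k,s$) are safe squares, the pair $(f,g)$ is forward-safe and the pair $(h,k)$ is backward-safe. Then the outer square ($p$, $g\circ f$, $k\circ h$, $s$) is a safe square.
   Context: Nominal sets over a countably infinite set $\mathcal V$ of names. For an equivariant $f:X\to Y$: $u$ is $f$-safe if $|\mathsf{supp}(u)|=\max\{|\mathsf{supp}(v)|:v\in f^{-1}(f(u))\}$ (maximum existing); $\mathsf{bv}_f(u)=\mathsf{supp}(u)\setminus\mathsf{supp}(f(u))$; $f$ is safe if every element of $Y$ has an $f$-safe preimage. A commuting square $a:Z\to X$, $f:X\to W$, $b:Z\to Y$, $c:Y\to W$ ($f\circ a=c\circ b$) is a safe square if for every $f$-safe $u\in X$ and $v\in Y$ with $f(u)=c(v)$ and $\mathsf{bv}_f(u)\cap\mathsf{supp}(v)=\emptyset$ there is a $b$-safe $z\in Z$ with $a(z)=u$, $b(z)=v$. For safe maps $f:X\to Y$, $g:Y\to W$: the pair $(f,g)$ is forward-safe if for every $(g\circ f)$-safe $u$, $f(u)$ is $g$-safe; it is backward-safe if every $f$-safe $u$ with $f(u)$ $g$-safe is $(g\circ f)$-safe. *)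

(* Defs.v *)
From mathcomp Require Import all_boot.
Set Implicit Arguments. Unset Strict Implicit. Unset Printing Implicit Defensive.

(* Names: the countably infinite set V is taken to be nat. *)

Record fperm := FPerm {
  pfun :> nat -> nat;
  pinv : nat -> nat;
  pfunK : cancel pfun pinv;
  pinvK : cancel pinv pfun;
  pfin : exists n, forall a, n <= a -> pfun a = a
}.

Lemma id_fin : exists n, forall a : nat, n <= a -> id a = a.
Proof. by exists 0. Qed.

Definition perm_id : fperm := @FPerm id id (fun _ => erefl) (fun _ => erefl) id_fin.

Lemma comp_fin (p q : fperm) : exists n, forall a, n <= a -> p (q a) = a.
Proof.
case: (pfin p) => m Hm; case: (pfin q) => n Hn; exists (maxn m n) => a Ha.
rewrite Hn ?Hm //; [exact: leq_trans (leq_maxl m n) Ha | exact: leq_trans (leq_maxr m n) Ha].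
Qed.

Definition perm_comp (p q : fperm) : fperm :=
  @FPerm (fun a => p (q a)) (fun a => pinv q (pinv p a))
    (fun a => etrans (f_equal (pinv q) (pfunK p (q a))) (pfunK q a))
    (fun a => etrans (f_equal p (pinvK q (pinv p a))) (pinvK p a))
    (comp_fin p q).

(* A nominal set: a set with an action of finitely supported permutations
   in which every element has a (least) finite support.  [supp x] is the
   least finite support of x, given as a duplicate-free list; it is uniquely
   determined (as a set) by the axioms [supp_supports] and [supp_least]. *)
Definition supports (X : Type) (act : fperm -> X -> X) (A : seq nat) (x : X) :=
  forall p : fperm, (forall a, a \in A -> p a = a) -> act p x = x.

Record nominal := Nominal {
  carrier :> Type;
  act : fperm -> carrier -> carrier;
  act_id : forall x, act perm_id x = x;
  act_comp : forall p q x, act (perm_comp p q) x = act p (act q x);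
  act_ext : forall (p q : fperm) x, (forall a, p a = q a) -> act p x = act q x;
  supp : carrier -> seq nat;
  supp_uniq : forall x, uniq (supp x);
  supp_supports : forall x, supports act (supp x) x;
  supp_least : forall x (A : seq nat), supports act A x ->
                 forall a, a \in supp x -> a \in A
}.

Definition equivariant (X Y : nominal) (f : X -> Y) :=
  forall (p : fperm) (x : X), f (act p x) = act p (f x).

(* u is f-safe: |supp u| is the maximum of |supp v| over the fibre of f(u)
   (u lies in that fibre, so the maximum exists iff it is attained at u). *)
Definition fsafe (X Y : nominal) (f : X -> Y) (u : X) :=
  forall v : X, f v = f u -> size (supp v) <= size (supp u).

Definition bv (X Y : nominal) (f : X -> Y) (u : X) : seq nat :=
  [seq a <- supp u | a \notin supp (f u)].

Definition safe_map (X Y : nominal) (f : X -> Y) :=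
  forall y : Y, exists2 u : X, f u = y & fsafe f u.

Definition safe_square (Z X Y W : nominal)
    (a : Z -> X) (f : X -> W) (b : Z -> Y) (c : Y -> W) :=
  (forall z, f (a z) = c (b z)) /\
  forall (u : X) (v : Y), fsafe f u -> f u = c v ->
    (forall n, n \in bv f u -> n \notin supp v) ->
    exists z : Z, [/\ fsafe b z, a z = u & b z = v].

Definition forward_safe (X Y W : nominal) (f : X -> Y) (g : Y -> W) :=
  [/\ safe_map f, safe_map g &
      forall u : X, fsafe (fun x => g (f x)) u -> fsafe g (f u)].

Definition backward_safe (X Y W : nominal) (f : X -> Y) (g : Y -> W) :=
  [/\ safe_map f, safe_map g &
      forall u : X, fsafe f u -> fsafe g (f u) -> fsafe (fun x => g (f x)) u].

(* Main.v *)
Require Import Defs.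
From mathcomp Require Import all_boot.

Set Implicit Arguments. Unset Strict Implicit. Unset Printing Implicit Defensive.

Lemma inv_fin (p : fperm) : exists n, forall a, n <= a -> pinv p a = a.
Proof.
case: (pfin p) => n Hn; exists n => a Ha.
by rewrite -{1}(Hn a Ha) pfunK.
Qed.

Definition perm_inv (p : fperm) : fperm :=
  @FPerm (pinv p) p (pinvK p) (pfunK p) (inv_fin p).

Lemma supp_act (X : nominal) (pi : fperm) (x : X) a :
  a \in supp (act pi x) -> pinv pi a \in supp x.
Proof.
move=> Ha.
have Hs : supports (@act X) (map pi (supp x)) (act pi x).
  move=> sg Hsg.
  rewrite -act_comp.
  set t := perm_comp (perm_inv pi) (perm_comp sg pi).
  have -> : act (perm_comp sg pi) x = act (perm_comp pi t) x.
    apply: act_ext => b /=; by rewrite pinvK.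
  rewrite act_comp; congr (act pi _).
  apply: supp_supports => b Hb /=.
  by rewrite Hsg ?pfunK // map_f.
have := supp_least Hs Ha.
case/mapP => b Hb ->; by rewrite pfunK.
Qed.

Lemma size_supp_act_le (X : nominal) (pi : fperm) (x : X) :
  size (supp (act pi x)) <= size (supp x).
Proof.
rewrite -(size_map pi (supp x)).
apply: uniq_leq_size; first exact: supp_uniq.
move=> a Ha; apply/mapP; exists (pinv pi a); first exact: supp_act.
by rewrite pinvK.
Qed.

Lemma size_supp_act (X : nominal) (pi : fperm) (x : X) :
  size (supp (act pi x)) = size (supp x).
Proof.
apply/eqP; rewrite eqn_leq size_supp_act_le /=.
have E : x = act (perm_inv pi) (act pi x).
  by rewrite -act_comp -{1}(act_id x); apply: act_ext => b /=; rewrite pfunK.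
rewrite {1}E; exact: size_supp_act_le.
Qed.

Lemma supp_eqv (X Y : nominal) (f : X -> Y) (ef : equivariant f) (x : X) a :
  a \in supp (f x) -> a \in supp x.
Proof.
apply: supp_least => sg Hsg; rewrite -ef; congr f; exact: supp_supports.
Qed.

Definition swapf (b c x : nat) := if x == b then c else if x == c then b else x.

Lemma swapfK b c : cancel (swapf b c) (swapf b c).
Proof.
move=> x; rewrite /swapf.
case: (eqVneq x b) => [->|hb]; first by rewrite eqxx; case: eqVneq.
case: (eqVneq x c) => [->|hc]; first by rewrite eqxx.
by rewrite (negbTE hb) (negbTE hc).
Qed.

Lemma swap_fin b c : exists n, forall a, n <= a -> swapf b c a = a.
Proof.
exists (maxn b c).+1 => a Ha; rewrite /swapf.
have hb : a != b by apply/eqP => E; move: Ha; rewrite E ltnNge leq_maxl.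
have hc : a != c by apply/eqP => E; move: Ha; rewrite E ltnNge leq_maxr.
by rewrite (negbTE hb) (negbTE hc).
Qed.

Definition swap b c : fperm :=
  @FPerm (swapf b c) (swapf b c) (swapfK b c) (swapfK b c) (swap_fin b c).

Lemma le_sumn (s : seq nat) x : x \in s -> x <= sumn s.
Proof.
elim: s => [|y s IH] //=; rewrite inE => /orP [/eqP ->|H].
  by rewrite leq_addr.
by apply: leq_trans (IH H) _; rewrite leq_addl.
Qed.

Lemma fresh (s : seq nat) : exists c, c \notin s.
Proof.
exists (sumn s).+1; apply/negP => /le_sumn; by rewrite ltnn.
Qed.

Lemma count_lt (T : eqType) (P P' : pred T) (s : seq T) :
  (forall x, P x -> P' x) -> (exists2 x, x \in s & P' x && ~~ P x) ->
  count P s < count P' s.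
Proof.
move=> HP; elim: s => [|y s IH] [x]; first by [].
rewrite inE => /orP [/eqP ->|Hx] Hxp /=.
  case/andP: Hxp => -> /negbTE ->; rewrite add0n add1n ltnS.
  by apply: sub_count.
rewrite -addnS; apply: leq_add; last by apply: IH; exists x.
by case Py: (P y) => //; rewrite (HP _ Py).
Qed.

Section Rename.
Variables (Y2 Y1 W2 : nominal) (q : Y2 -> Y1) (k : Y2 -> W2).
Hypotheses (eq_ : equivariant q) (ek : equivariant k).
Variable U : seq nat.

Definition bad (y : Y2) (a : nat) :=
  [&& a \in supp y, a \notin supp (q y) & a \notin supp (k y)].

Lemma rename n : forall y, count (bad y) U <= n ->
  exists y', [/\ q y' = q y, k y' = k y, size (supp y') = size (supp y) &
    forall a, a \in U -> ~~ bad y' a].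
Proof.
elim: n => [|n IH] y Hn.
  exists y; split => // a Ha; apply/negP => Hb.
  have : ~~ has (bad y) U by rewrite has_count -leqNgt.
  by move/hasPn => /(_ a Ha); rewrite Hb.
case: (boolP (has (bad y) U)); last first.
  move=> Hh; exists y; split => // a Ha; apply/negP => Hb.
  by move/hasPn: Hh => /(_ a Ha); rewrite Hb.
case/hasP => b HbU Hb.
case: (fresh (U ++ supp y ++ supp (q y) ++ supp (k y))) => c.
rewrite !mem_cat !negb_or => /and4P [cU cy cq ck].
case/and3P: Hb => by_ bq bk.
set y1 := act (swap b c) y.
have fixq : q y1 = q y.
  rewrite /y1 eq_; apply: supp_supports => a Ha /=; rewrite /swapf.
  case: eqVneq => [E|_]; first by move: bq; rewrite -E Ha.
  case: eqVneq => [E|_] //; by move: cq; rewrite -E Ha.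
have fixk : k y1 = k y.
  rewrite /y1 ek; apply: supp_supports => a Ha /=; rewrite /swapf.
  case: eqVneq => [E|_]; first by move: bk; rewrite -E Ha.
  case: eqVneq => [E|_] //; by move: ck; rewrite -E Ha.
have Hsub : forall a, a \in U -> bad y1 a -> bad y a && (a != b).
  move=> a aU /and3P [Ha Haq Hak].
  have := supp_act Ha; rewrite /= /swapf.
  case: eqVneq => [E|hb]; first by rewrite (negbTE cy).
  case: eqVneq => [E|hc] Hy.
    by move: cU; rewrite -E aU.
  by rewrite /bad Hy -fixq -fixk Haq Hak.
have Hlt : count (bad y1) U < count (bad y) U.
  apply: (@leq_trans (count (fun a => bad y a && (a != b)) U).+1).
    rewrite ltnS (@eq_in_count _ _ (fun a => (a \in U) && bad y1 a)); last by move=> a ->.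
    apply: sub_count => a /andP [aU] /(Hsub a aU); exact.
  apply: count_lt; first by move=> a /andP [].
  by exists b => //; rewrite /bad by_ bq bk eqxx.
have [y' [H1 H2 H3 H4]] := IH y1 (leq_trans Hlt Hn).
exists y'; split => //; first by rewrite H1.
  by rewrite H2.
by rewrite H3 /y1 size_supp_act.
Qed.
End Rename.

Theorem lemma5p40 (X1 X2 Y1 Y2 W1 W2 : nominal)
  (p : X2 -> X1) (q : Y2 -> Y1) (s : W2 -> W1)
  (f : X1 -> Y1) (g : Y1 -> W1) (h : X2 -> Y2) (k : Y2 -> W2)
  (ep : equivariant p) (eq_ : equivariant q) (es : equivariant s)
  (ef : equivariant f) (eg : equivariant g) (eh : equivariant h) (ek : equivariant k)
  (sq1c : forall x, f (p x) = q (h x))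
  (sq2c : forall y, g (q y) = s (k y))
  (sq1 : safe_square p f h q)
  (sq2 : safe_square q g k s)
  (fw : forward_safe f g)
  (bw : backward_safe h k) :
  safe_square p (fun x => g (f x)) (fun x => k (h x)) s.
Proof.
split; first by move=> x; rewrite sq1c sq2c.
move=> u v Hsafe Heq Hbv.
have fu_safe : fsafe f u by move=> w Hw; apply: Hsafe; rewrite /= Hw.
case: fw => _ _ /(_ u Hsafe) gfu_safe.
have [y [ky qy ky']] : exists y, [/\ fsafe k y, q y = f u & k y = v].
  apply: sq2.2 => // n; rewrite /bv mem_filter => /andP [Hn1 Hn2].
  apply: Hbv; rewrite /bv mem_filter Hn1 /=; exact: (supp_eqv ef).
have [y' [H1 H2 H3 H4]] := @rename _ _ _ q k eq_ ek (supp u) _ y (leqnn _).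
have ky'safe : fsafe k y'.
  by move=> w Hw; rewrite H3; apply: ky; rewrite Hw H2.
have [z [hz pz hz']] : exists z, [/\ fsafe h z, p z = u & h z = y'].
  apply: sq1.2 => //; first by rewrite H1.
  move=> n; rewrite /bv mem_filter => /andP [Hn1 Hn2]; apply/negP => Hny.
  have := H4 n Hn2; rewrite /bad Hny H1 qy Hn1 /= => Hk.
  have Hnv : n \in supp v by move: Hk; rewrite H2 ky'; case: (n \in supp v).
  have : n \notin supp v.
    apply: Hbv; rewrite /bv mem_filter Hn2 andbT.
    apply/negP => /(supp_eqv eg); by rewrite (negbTE Hn1).
  by rewrite Hnv.
exists z; split => //; last by rewrite hz' H2.
case: bw => _ _ Hb; apply: Hb => //; by rewrite hz'.
Qed.
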